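(* For every $n\ge5$, the quasisymmetric functions $F(T)$, where $T$ ranges over the (pairwise non-isomorphic) unlabelled rooted trees on $n$ vertices, are linearly dependent.
   Context: For a rooted tree $T$, a $T$-partition is a function $f$ from the vertices to $\mathbb{N}=\{1,2,\dots\}$ with $f(u)<f(w)$ whenever $w$ is the parent of $u$, and $F(T)=\sum_f\prod_u x_{f(u)}$ over all $T$-partitions, a quasisymmetric formal power series in $x_1,x_2,\dots$ depending only on the isomorphism class of $T$. *)

(* Defs.v *)
From mathcomp Require Import all_boot all_order all_algebra all_fingroup.
Set Implicit Arguments. Unset Strict Implicit. Unset Printing Implicit Defensive.

(* A rooted tree on the vertex set 'I_n is given by its parent function:
   p v = Some w  means w is the parent of v;  p v = None  means v is the root. *)
Definition parent_fun (n : nat) := {ffun 'I_n -> option 'I_n}.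

(* Exactly one root, and walking up from any vertex reaches the root
   (no cycles): after n steps of "go to parent" one has left the tree. *)
Definition is_rooted_tree (n : nat) (p : parent_fun n) : bool :=
  [exists r : 'I_n, [forall v : 'I_n, (p v == None) == (v == r)]] &&
  [forall v : 'I_n, iter n (obind p) (Some v) == None].

Definition rtree_iso (n : nat) (p q : parent_fun n) : bool :=
  [exists s : {perm 'I_n}, [forall v : 'I_n, q (s v) == omap s (p v)]].

(* A monomial x_1^{a_1} x_2^{a_2} ... x_k^{a_k} is represented by the
   sequence [:: a_1; ...; a_k] (trailing zeros allowed).  A function
   f : 'I_n -> 'I_k encodes the map u |-> (f u).+1 into {1,...,k}. *)
Definition is_Tpartition (n k : nat) (p : parent_fun n)
    (f : {ffun 'I_n -> 'I_k}) : bool :=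
  [forall u : 'I_n, forall w : 'I_n, (p u == Some w) ==> (f u < f w)].

(* Coefficient of the monomial m in F(T) = sum_f prod_u x_{f(u)}:
   the number of T-partitions f with |f^{-1}(i)| = a_i for all i. *)
Definition coefF (n : nat) (p : parent_fun n) (m : seq nat) : nat :=
  #|[set f : {ffun 'I_n -> 'I_(size m)} |
      is_Tpartition p f &&
      [forall i : 'I_(size m), #|[set u : 'I_n | f u == i]| == nth 0 m i]]|.

(* Main.v *)
Require Import Defs.
From mathcomp Require Import all_boot all_order all_algebra all_fingroup.
From mathcomp Require Import zify lra.
Import GRing.Theory.
Set Implicit Arguments. Unset Strict Implicit. Unset Printing Implicit Defensive.
Open Scope nat_scope.

Definition bt (bot : seq nat) (h : nat -> nat) : bool :=
  all (fun u => h u < h (nth 0 bot u)) (iota 0 4).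
Definition wfb (bot : seq nat) : bool :=
  all (fun u => (u < nth 0 bot u) && (nth 0 bot u <= 4)) (iota 0 4) && (nth 0 bot 3 == 4).
Definition botA := [:: 3;3;4;4].
Definition botB := [:: 2;3;4;4].
Definition botC := [:: 3;3;3;4].
Definition botD := [:: 2;3;3;4].
Definition botE := [:: 2;2;3;4].
Definition LL (g : nat -> nat) : nat := bt botB g + bt botC g + bt botE g.
Definition RR (g : nat -> nat) : nat := bt botA g + (bt botD g).*2.
Definition plit : seq (seq nat) := [::[::0;1;2;3;4]; [::0;1;2;4;3]; [::0;1;3;2;4]; [::0;1;3;4;2]; [::0;1;4;2;3]; [::0;1;4;3;2]; [::0;2;1;3;4]; [::0;2;1;4;3]; [::0;2;3;1;4]; [::0;2;3;4;1]; [::0;2;4;1;3]; [::0;2;4;3;1]; [::0;3;1;2;4]; [::0;3;1;4;2]; [::0;3;2;1;4]; [::0;3;2;4;1]; [::0;3;4;1;2]; [::0;3;4;2;1]; [::0;4;1;2;3]; [::0;4;1;3;2]; [::0;4;2;1;3]; [::0;4;2;3;1]; [::0;4;3;1;2]; [::0;4;3;2;1]; [::1;0;2;3;4]; [::1;0;2;4;3]; [::1;0;3;2;4]; [::1;0;3;4;2]; [::1;0;4;2;3]; [::1;0;4;3;2]; [::1;2;0;3;4]; [::1;2;0;4;3]; [::1;2;3;0;4]; [::1;2;3;4;0]; [::1;2;4;0;3]; [::1;2;4;3;0]; [::1;3;0;2;4]; [::1;3;0;4;2]; [::1;3;2;0;4]; [::1;3;2;4;0]; [::1;3;4;0;2];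 [::1;3;4;2;0]; [::1;4;0;2;3]; [::1;4;0;3;2]; [::1;4;2;0;3]; [::1;4;2;3;0]; [::1;4;3;0;2]; [::1;4;3;2;0]; [::2;0;1;3;4]; [::2;0;1;4;3]; [::2;0;3;1;4]; [::2;0;3;4;1]; [::2;0;4;1;3]; [::2;0;4;3;1]; [::2;1;0;3;4]; [::2;1;0;4;3]; [::2;1;3;0;4]; [::2;1;3;4;0]; [::2;1;4;0;3]; [::2;1;4;3;0]; [::2;3;0;1;4]; [::2;3;0;4;1]; [::2;3;1;0;4]; [::2;3;1;4;0]; [::2;3;4;0;1]; [::2;3;4;1;0]; [::2;4;0;1;3]; [::2;4;0;3;1]; [::2;4;1;0;3]; [::2;4;1;3;0]; [::2;4;3;0;1]; [::2;4;3;1;0]; [::3;0;1;2;4]; [::3;0;1;4;2]; [::3;0;2;1;4]; [::3;0;2;4;1]; [::3;0;4;1;2]; [::3;0;4;2;1]; [::3;1;0;2;4]; [::3;1;0;4;2]; [::3;1;2;0;4]; [::3;1;2;4;0]; [::3;1;4;0;2]; [::3;1;4;2;0]; [::3;2;0;1;4]; [::3;2;0;4;1]; [::3;2;1;0;4]; [::3;2;1;4;0]; [::3;2;4;0;1]; [::3;2;4;1;0]; [::3;4;0;1;2]; [::3;4;0;2;1]; [::3;4;1;0;2]; [::3;4;1;2;0]; [::3;4;2;0;1]; [::3;4;2;1;0]; [::4;0;1;2;3]; [::4;0;1;3;2]; [::4;0;2;1;3]; [::4;0;2;3;1]; [::4;0;3;1;2]; [::4;0;3;2;1]; [::4;1;0;2;3];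 [::4;1;0;3;2]; [::4;1;2;0;3]; [::4;1;2;3;0]; [::4;1;3;0;2]; [::4;1;3;2;0]; [::4;2;0;1;3]; [::4;2;0;3;1]; [::4;2;1;0;3]; [::4;2;1;3;0]; [::4;2;3;0;1]; [::4;2;3;1;0]; [::4;3;0;1;2]; [::4;3;0;2;1]; [::4;3;1;0;2]; [::4;3;1;2;0]; [::4;3;2;0;1]; [::4;3;2;1;0]].
Definition chk (r : seq nat) : bool :=
  sumn (map (fun s => LL (fun i => nth 0 r (nth 0 s i))) plit) ==
  sumn (map (fun s => RR (fun i => nth 0 r (nth 0 s i))) plit).
Lemma fin_check : all (fun a => all (fun b => all (fun c => all (fun d => all (fun e =>
  chk [:: a; b; c; d; e]) (iota 0 6)) (iota 0 6)) (iota 0 6)) (iota 0 6)) (iota 0 6).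
Proof. vm_compute. reflexivity. Qed.

Lemma bt_cmp bot h h' : wfb bot ->
  (forall u v, u < 5 -> v < 5 -> (h u < h v) = (h' u < h' v)) -> bt bot h = bt bot h'.
Proof.
move=> /andP[/allP wf _] H; apply: eq_in_all => u; rewrite mem_iota /= => hu.
have /andP[h1 h2] : (u < nth 0 bot u) && (nth 0 bot u <= 4) by apply: wf; rewrite mem_iota.
by apply: H; lia.
Qed.

Lemma bt_ext bot h h' : wfb bot -> (forall u, u < 5 -> h u = h' u) -> bt bot h = bt bot h'.
Proof. by move=> wf H; apply: bt_cmp => // u v hu hv; rewrite !H. Qed.

Lemma wf_all : [/\ wfb botA, wfb botB, wfb botC, wfb botD & wfb botE].
Proof. by []. Qed.

Lemma LL_cmp h h' : (forall u v, u < 5 -> v < 5 -> (h u < h v) = (h' u < h' v)) -> LL h = LL h'.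
Proof. case: wf_all => a b c d e H. by rewrite /LL !(bt_cmp _ H). Qed.
Lemma RR_cmp h h' : (forall u v, u < 5 -> v < 5 -> (h u < h v) = (h' u < h' v)) -> RR h = RR h'.
Proof. case: wf_all => a b c d e H. by rewrite /RR !(bt_cmp _ H). Qed.
Lemma LL_ext h h' : (forall u, u < 5 -> h u = h' u) -> LL h = LL h'.
Proof. by move=> H; apply: LL_cmp => u v hu hv; rewrite !H. Qed.
Lemma RR_ext h h' : (forall u, u < 5 -> h u = h' u) -> RR h = RR h'.
Proof. by move=> H; apply: RR_cmp => u v hu hv; rewrite !H. Qed.

Definition PPn n : seq (seq nat) :=
  map (fun s : {perm 'I_n.+1} => [seq val (s (inord i)) | i <- iota 0 n.+1]) (enum {perm 'I_n.+1}).

Lemma sum_PP n (F : seq nat -> nat) : \sum_(s <- PPn n) F s =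
  \sum_(s : {perm 'I_n.+1}) F [seq val (s (inord i)) | i <- iota 0 n.+1].
Proof. by rewrite big_map big_enum. Qed.

Lemma PPn_uniq n : uniq (PPn n).
Proof.
rewrite map_inj_uniq ?enum_uniq // => s1 s2 H; apply/permP => i.
have := congr1 (nth 0 ^~ i) H.
rewrite !(nth_map 0) ?size_iota // nth_iota // add0n inord_val.
by move/val_inj.
Qed.

Lemma PPn_mem n x : x \in PPn n -> perm_eq x (iota 0 n.+1).
Proof.
move=> /mapP[s _ ->].
apply: uniq_perm; last first.
  move=> y; rewrite mem_iota add0n; apply/idP/idP.
    by move=> /mapP[j _ ->]; apply: ltn_ord.
  move=> hy; apply/mapP; exists (val ((s^-1)%g (inord y))); first by rewrite mem_iota add0n ltn_ord.
  by rewrite inord_val permKV /= inordK //; case/andP: hy.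
 by apply: iota_uniq.
rewrite map_inj_in_uniq ?iota_uniq // => a b; rewrite !mem_iota !add0n => ha hb.
move/val_inj/perm_inj => /(congr1 val) /=; rewrite !inordK //.
Qed.

Lemma PPn_size n : size (PPn n) = n.+1`!.
Proof. by rewrite size_map -cardE card_Sn. Qed.

Lemma plit_ok : [/\ uniq plit, size plit = 120, perm_eq plit (permutations (iota 0 5))
   & all (fun s => all (fun i => nth 0 s i < 5) (iota 0 5)) plit].
Proof. split; vm_compute; reflexivity. Qed.

Lemma PP_plit : perm_eq (PPn 4) plit.
Proof.
case: plit_ok => up sp pp _.
have uPP := PPn_uniq 4.
apply: uniq_perm => //.
have sub : {subset PPn 4 <= plit}.
  move=> x /PPn_mem hx; by rewrite (perm_mem pp) mem_permutations.
have := uniq_min_size uPP sub; rewrite PPn_size sp => /(_ isT) [_ H]; exact: H.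
Qed.

Section Rank.
Variable g : nat -> nat.
Definition rk (j : nat) := #|[set j' : 'I_5 | g j' < g j]|.
Lemma rank_lt a b : a < 5 -> (g a < g b) = (rk a < rk b).
Proof.
move=> ha; case: (ltnP (g a) (g b)) => H.
  symmetry; apply: proper_card; apply/properP; split.
    by apply/subsetP => j; rewrite !inE => /ltn_trans; apply.
  by exists (inord a); rewrite !inE inordK // ltnn.
symmetry; apply/negbTE; rewrite -leqNgt; apply: subset_leq_card.
by apply/subsetP => j; rewrite !inE => /leq_trans; apply.
Qed.
Lemma rk_le j : rk j < 6.
Proof. by rewrite ltnS /rk; apply: leq_trans (max_card _) _; rewrite card_ord. Qed.
End Rank.

Lemma sym_sum (g : nat -> nat) :
  \sum_(s : {perm 'I_5}) LL (fun i => g (s (inord i))) =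
  \sum_(s : {perm 'I_5}) RR (fun i => g (s (inord i))).
Proof.
case: plit_ok => _ _ _ /allP pr.
have E : forall F : (nat -> nat) -> nat, (forall h h', (forall u, u < 5 -> h u = h' u) -> F h = F h') ->
  \sum_(s : {perm 'I_5}) F (fun i => g (s (inord i))) = \sum_(s <- plit) F (fun i => g (nth 0 s i)).
  move=> F Fe; rewrite -(perm_big _ PP_plit) sum_PP.
  apply: eq_bigr => s _; apply: Fe => u hu.
  by rewrite (nth_map 0) ?size_iota // nth_iota.
rewrite (E _ LL_ext) (E _ RR_ext).
set rl := [:: rk g 0; rk g 1; rk g 2; rk g 3; rk g 4].
have Hs : forall s, s \in plit -> forall F : (nat -> nat) -> nat,
   (forall h h', (forall u v, u < 5 -> v < 5 -> (h u < h v) = (h' u < h' v)) -> F h = F h') ->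
   F (fun i => g (nth 0 s i)) = F (fun i => nth 0 rl (nth 0 s i)).
  move=> s hs F Fc; apply: Fc => u v hu hv.
  have /allP ps := pr s hs.
  have hsu : nth 0 s u < 5 by apply: ps; rewrite mem_iota.
  have hsv : nth 0 s v < 5 by apply: ps; rewrite mem_iota.
  rewrite rank_lt //.
  have Hr : forall x, x < 5 -> nth 0 rl x = rk g x.
    by move=> x; case: x => [|[|[|[|[|x]]]]].
  by rewrite !Hr.
rewrite (eq_big_seq _ (fun s hs => Hs s hs _ LL_cmp)) (eq_big_seq _ (fun s hs => Hs s hs _ RR_cmp)).
have := fin_check.
move=> /allP /(_ (rk g 0)); rewrite mem_iota rk_le => /(_ isT).
move=> /allP /(_ (rk g 1)); rewrite mem_iota rk_le => /(_ isT).
move=> /allP /(_ (rk g 2)); rewrite mem_iota rk_le => /(_ isT).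
move=> /allP /(_ (rk g 3)); rewrite mem_iota rk_le => /(_ isT).
move=> /allP /(_ (rk g 4)); rewrite mem_iota rk_le => /(_ isT).
by rewrite /chk !sumnE !big_map => /eqP.
Qed.

Lemma card_small n (P : pred 'I_n.+1) b : b <= n.+1 -> (forall w, P w -> w < b) ->
  #|[set w | P w]| = count (fun i => P (inord i)) (iota 0 b).
Proof.
move=> hb HP.
rewrite -sum1dep_card.
have -> : \sum_(w | P w) 1 = \sum_(i < n.+1 | P (inord i)) 1.
  by apply: eq_bigl => i; rewrite inord_val.
rewrite -(big_mkord (fun i => P (inord i)) (fun _ => 1)) sum1_count.
have -> : index_iota 0 n.+1 = iota 0 b ++ iota (0 + b) (n.+1 - b) by rewrite /index_iota subn0 -iotaD subnKC.
rewrite count_cat add0n.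
rewrite (@eq_in_count _ _ pred0 (iota b _)) ?count_pred0 ?addn0 // => i.
rewrite mem_iota => /andP[h1 h2] /=; apply/negbTE/negP => /HP.
by rewrite inordK; lia.
Qed.

Section Fam.
Variable n0 : nat.
Local Notation N := n0.+4.+1.

Definition pt (bot : seq nat) : parent_fun N :=
  [ffun v : 'I_N => if (v < 4) then Some (inord (nth 0 bot v))
     else if v.+1 < N then Some (inord v.+1) else None].

Lemma wfbP bot : wfb bot -> forall u, u < 4 -> u < nth 0 bot u <= 4.
Proof. by move=> /andP[/allP H _] u hu; apply: H; rewrite mem_iota. Qed.

Lemma pt_lt bot : wfb bot -> forall v w, pt bot v = Some w -> v < w.
Proof.
move=> wf v w; rewrite ffunE; case: ifP => h4.
  by case=> <-; have /andP[a b] := wfbP wf h4; rewrite inordK //; lia.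
by case: ifP => // h5 [<-]; rewrite inordK.
Qed.

Lemma pt_tree bot : wfb bot -> is_rooted_tree (pt bot).
Proof.
move=> wf; apply/andP; split.
  apply/existsP; exists ord_max; apply/forallP => v; rewrite ffunE -val_eqE /=.
  case: v => v hv /=; case: ifP => h4.
    by have -> : (v == n0.+4) = false by apply/eqP; lia.
  case: ifP => h5.
    by have -> : (v == n0.+4) = false by apply/eqP; lia.
  by have -> : (v == n0.+4) = true by apply/eqP; lia.
apply/forallP => v.
have key : forall k, match iter k (obind (pt bot)) (Some v) with
    Some w => v + k <= w | None => true end.
  elim=> [|k IH] /=; first by rewrite addn0.
  move: IH; case: (iter k _ _) => [w|] //= IH.
  case E: (pt bot w) => [w'|] //; have := pt_lt wf E; lia.
have := key N; case: (iter N _ _) => // w; have := ltn_ord w; lia.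
Qed.

Definition hf k (f : {ffun 'I_N -> 'I_k}) (i : nat) : nat := f (inord i).

Definition chain1 k (f : {ffun 'I_N -> 'I_k}) :=
  [forall u : 'I_N, ((4 <= u) && (u.+1 < N)) ==> (f u < f (inord u.+1))].
Definition chain2 k (f : {ffun 'I_N -> 'I_k}) :=
  (5 < N) ==> [forall u : 'I_N, (u < 5) ==> (f u < f (inord 5))].
Definition chain3 k (f : {ffun 'I_N -> 'I_k}) :=
  [forall u : 'I_N, ((5 <= u) && (u.+1 < N)) ==> (f u < f (inord u.+1))].

Lemma Tpart_alt n k (p : parent_fun n) (f : {ffun 'I_n -> 'I_k}) :
  is_Tpartition p f = [forall u, if p u is Some w then f u < f w else true].
Proof.
rewrite /is_Tpartition; apply/forallP/forallP => H u.
  by case E: (p u) => [w|] //; have := forallP (H u) w; rewrite E eqxx.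
apply/forallP => w; apply/implyP => /eqP E; have := H u; by rewrite E.
Qed.

Lemma Tpart_pt bot k (f : {ffun 'I_N -> 'I_k}) : wfb bot ->
  is_Tpartition (pt bot) f = bt bot (hf f) && chain1 f.
Proof.
move=> wf; rewrite Tpart_alt; apply/forallP/andP.
  move=> H; split.
    apply/allP => u; rewrite mem_iota => /andP[_ hu].
    have := H (inord u); rewrite ffunE inordK; last by lia.
    by rewrite hu.
  apply/forallP => u; apply/implyP => /andP[h4 h5]; have := H u.
  by rewrite ffunE ltnNge h4 /= h5.
case=> /allP hb /forallP hc u; rewrite ffunE; case: ifP => h4.
  by have := hb u; rewrite mem_iota h4 /= => /(_ isT); rewrite /hf inord_val.
case: ifP => h5 //; have := hc u; by rewrite h5 andbT leqNgt h4.
Qed.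

Lemma bt_top bot h : wfb bot -> bt bot h -> forall u, u < 4 -> h u < h 4.
Proof.
move=> wf /allP hb.
suff key : forall d u, 4 - u <= d -> u < 4 -> h u < h 4.
  by move=> u; apply: key (leqnn _).
elim=> [|d IH] u hd hu; first by lia.
have := hb u; rewrite mem_iota hu => /(_ isT) H.
have := wfbP wf hu => /andP[h1 h2].
case: (ltnP (nth 0 bot u) 4) => h3.
  apply: ltn_trans H (IH _ _ h3); lia.
by have -> : 4 = nth 0 bot u by lia.
Qed.

Lemma chain_split bot k (f : {ffun 'I_N -> 'I_k}) : wfb bot -> bt bot (hf f) ->
  chain1 f = chain2 f && chain3 f.
Proof.
move=> wf hb; have top := bt_top wf hb.
apply/idP/andP.
  move=> /forallP H; split.
    apply/implyP => h5; apply/forallP => u; apply/implyP => hu.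
    have h4 : f (inord 4) < f (inord 5 : 'I_N).
      by have := H (inord 4); rewrite inordK // h5.
    case: (ltnP u 4) => hu4.
      apply: ltn_trans h4; have := top u hu4; by rewrite /hf inord_val.
    have -> : u = inord 4 by apply/val_inj; rewrite /= inordK; lia.
    done.
  apply/forallP => u; apply/implyP => /andP[h1 h2]; have := H u.
  by rewrite h2 andbT; move/implyP; apply; lia.
case=> /implyP H2 /forallP H3; apply/forallP => u; apply/implyP => /andP[h1 h2].
case: (ltnP u 5) => hu.
  have hu4 : (u : nat) = 4 by lia.
  have h5 : 5 < N by lia.
  have := forallP (H2 h5) u; rewrite hu /= => H.
  by have -> : (inord u.+1 : 'I_N) = inord 5 by rewrite hu4.
by have := H3 u; rewrite hu h2.
Qed.

Definition fib (m : seq nat) (f : {ffun 'I_N -> 'I_(size m)}) :=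
  [forall i : 'I_(size m), #|[set u : 'I_N | f u == i]| == nth 0 m i].
Definition CC (m : seq nat) (f : {ffun 'I_N -> 'I_(size m)}) : nat :=
  [&& chain2 f, chain3 f & fib f].

Lemma coefF_pt bot m : wfb bot ->
  coefF (pt bot) m = \sum_(f : {ffun 'I_N -> 'I_(size m)}) CC f * bt bot (hf f).
Proof.
move=> wf; rewrite /coefF -sum1dep_card big_mkcond /=; apply: eq_bigr => f _.
rewrite Tpart_pt //; case hb: (bt bot (hf f)); last by rewrite /= muln0.
rewrite (chain_split wf hb) /CC /fib muln1.
by case: (chain2 f); case: (chain3 f); case: [forall _, _].
Qed.

End Fam.

Section Sym.
Variable n0 : nat.
Local Notation N := n0.+4.+1.

Definition ext (s : {perm 'I_5}) (v : 'I_N) : 'I_N :=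
  if v < 5 then inord (s (inord v)) else v.

Lemma ext_lt5 s v : (ext s v < 5) = (v < 5).
Proof.
rewrite /ext; case: ifP => h //.
by rewrite inordK ?ltn_ord //; have := ltn_ord (s (inord v)); lia.
Qed.

Lemma ext_inj s : injective (ext s).
Proof.
have lt : forall x : 'I_5, (x : nat) < N by move=> x; have := ltn_ord x; lia.
move=> v w; rewrite /ext; case: (ltnP v 5) => hv; case: (ltnP w 5) => hw.
- move=> /(congr1 val) /=; rewrite !inordK ?lt //.
  move=> /val_inj /perm_inj /(congr1 val) /=; rewrite !inordK //.
  by move/val_inj.
- move=> /(congr1 val) /=; rewrite !inordK ?lt //.
  have := ltn_ord (s (inord v)); lia.
- move=> /(congr1 val) /=; rewrite !inordK ?lt //.
  have := ltn_ord (s (inord w)); lia.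
- done.
Qed.

Definition ep s : {perm 'I_N} := perm (@ext_inj s).

Definition fs s k (f : {ffun 'I_N -> 'I_k}) : {ffun 'I_N -> 'I_k} := [ffun v => f (ep s v)].

Lemma fs_inj s k : injective (@fs s k).
Proof.
move=> f g H; apply/ffunP => v.
have := congr1 (fun F : {ffun 'I_N -> 'I_k} => F ((ep s)^-1 v)%g) H; by rewrite /= !ffunE permKV.
Qed.

Lemma ep_big s (v : 'I_N) : 5 <= v -> ep s v = v.
Proof. by rewrite permE /ext leqNgt => /negbTE ->. Qed.

Lemma CC_fs s m (f : {ffun 'I_N -> 'I_(size m)}) : CC (fs s f) = CC f.
Proof.
rewrite /CC; congr (nat_of_bool _).
have -> : fib (fs s f) = fib f.
  apply: eq_forallb => i; congr (_ == _).
  rewrite -[RHS](card_preimset _ (@perm_inj _ (ep s))).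
  by apply: eq_card => u; rewrite !inE ffunE.
have -> : chain3 (fs s f) = chain3 f.
  apply: eq_forallb => u; case: (ltnP u 5) => hu //=.
  case: (ltnP u.+1 N) => h //=.
  by rewrite !ffunE ep_big // ep_big // inordK //; lia.
suff -> : chain2 (fs s f) = chain2 f by [].
rewrite /chain2; case: (ltnP 5 N) => //= h5.
have e5 : ep s (inord 5) = inord 5 by rewrite ep_big // inordK.
apply/forallP/forallP => H u.
  apply/implyP => hu.
  have hv : ((ep s)^-1)%g u < 5.
    by have := permKV (ep s) u; rewrite permE => e; rewrite -(ext_lt5 s) e.
  by have := implyP (H (((ep s)^-1)%g u)) hv; rewrite !ffunE permKV e5.
apply/implyP => hu; rewrite !ffunE e5.
by apply: (implyP (H (ep s u))); rewrite permE ext_lt5.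
Qed.

Lemma hf_fs s k (f : {ffun 'I_N -> 'I_k}) i : i < 5 -> hf (fs s f) i = hf f (s (inord i)).
Proof.
move=> hi; rewrite /hf ffunE permE /ext inordK; last by lia.
by rewrite hi.
Qed.

Lemma main_nat m :
  \sum_(f : {ffun 'I_N -> 'I_(size m)}) CC f * LL (hf f) =
  \sum_(f : {ffun 'I_N -> 'I_(size m)}) CC f * RR (hf f).
Proof.
have E : forall Phi : (nat -> nat) -> nat,
   (forall h h', (forall u, u < 5 -> h u = h' u) -> Phi h = Phi h') ->
   5`! * \sum_(f : {ffun 'I_N -> 'I_(size m)}) CC f * Phi (hf f) =
   \sum_(f : {ffun 'I_N -> 'I_(size m)}) CC f *
      \sum_(s : {perm 'I_5}) Phi (fun i => hf f (s (inord i))).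
  move=> Phi Pe.
  rewrite -card_Sn -sum_nat_const.
  have -> : \sum_(f : {ffun 'I_N -> 'I_(size m)}) CC f *
      \sum_(s : {perm 'I_5}) Phi (fun i => hf f (s (inord i))) =
      \sum_(s : {perm 'I_5}) \sum_(f : {ffun 'I_N -> 'I_(size m)}) CC f *
        Phi (fun i => hf f (s (inord i))).
    rewrite exchange_big /=; apply: eq_bigr => f _; by rewrite big_distrr.
  apply: eq_bigr => s _.
  rewrite (reindex_inj (@fs_inj s (size m))) /=.
  apply: eq_bigr => f _; rewrite CC_fs; congr (_ * _).
  by apply: Pe => u hu; rewrite hf_fs.
apply/eqP; rewrite -(eqn_pmul2l (isT : 0 < 5`!)); apply/eqP.
rewrite (E _ LL_ext) (E _ RR_ext); apply: eq_bigr => f _.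
by rewrite sym_sum.
Qed.

End Sym.

Definition nch n (p : parent_fun n) (w : 'I_n) := #|[set u | p u == Some w]|.
Definition lp n (p : parent_fun n) (w : 'I_n) : bool :=
  (nch p w == 0) && (if p w is Some w' then nch p w' == 2 else false).
Definition inv1 n (p : parent_fun n) := #|[set w | nch p w == 0]|.
Definition inv2 n (p : parent_fun n) := #|[set w | lp p w]|.

Lemma iso_inv n (p q : parent_fun n) : rtree_iso p q -> inv1 p = inv1 q /\ inv2 p = inv2 q.
Proof.
case/existsP => s /forallP H.
have Hq : forall v, q (s v) = omap s (p v) by move=> v; apply/eqP.
have Hn : forall w, nch q (s w) = nch p w.
  move=> w; rewrite /nch -(card_preimset _ (@perm_inj _ s)).
  apply: eq_card => u; rewrite !inE Hq.
  case: (p u) => [x|] //=.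
  by apply/eqP/eqP => [[/perm_inj ->]|[->]].
split.
  rewrite /inv1 -[RHS](card_preimset _ (@perm_inj _ s)).
  by apply: eq_card => u; rewrite !inE Hn.
rewrite /inv2 -[RHS](card_preimset _ (@perm_inj _ s)).
apply: eq_card => u; rewrite !inE /lp Hn Hq.
by case: (p u) => [x|] //=; rewrite Hn.
Qed.

Definition cnt (bot : seq nat) i := count (fun u => nth 0 bot u == i) (iota 0 4).
Definition I1 bot := count (fun i => cnt bot i == 0) (iota 0 4).
Definition I2 bot := count (fun i => (cnt bot i == 0) && (cnt bot (nth 0 bot i) == 2)) (iota 0 4).

Section Inv.
Variable n0 : nat.
Local Notation N := n0.+4.+1.

Lemma nch_pt bot (w : 'I_N) : wfb bot -> w < 5 -> nch (pt n0 bot) w = cnt bot w.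
Proof.
move=> wf hw; rewrite /nch (@card_small _ _ 4) //.
  apply: eq_in_count => u; rewrite mem_iota /= => hu.
  have /andP[a b] := wfbP wf hu.
  rewrite ffunE inordK; last by lia.
  rewrite hu; apply/eqP/eqP => [[<-]|e]; first by rewrite inordK //; lia.
  by rewrite e inord_val.
move=> u; rewrite ffunE; case: ifP => // h4.
case: ifP => // h5 /eqP [e]; move: hw; rewrite -e inordK //; lia.
Qed.

Lemma nch_pos bot (w : 'I_N) : wfb bot -> 4 <= w -> nch (pt n0 bot) w != 0.
Proof.
move=> wf hw; rewrite /nch -lt0n card_gt0; apply/set0Pn.
exists (inord w.-1); rewrite inE ffunE inordK; last by have := ltn_ord w; lia.
case: ifP => h4.
  have e : w.-1 = 3 by lia.
  rewrite e; move: wf => /andP[_ /eqP ->].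
  by apply/eqP; congr Some; apply/val_inj; rewrite /= inordK //; lia.
have e : w.-1.+1 = w by lia.
by rewrite e ltn_ord; apply/eqP; congr Some; apply/val_inj; rewrite /= inordK.
Qed.

Lemma inv_pt bot : wfb bot -> inv1 (pt n0 bot) = I1 bot /\ inv2 (pt n0 bot) = I2 bot.
Proof.
move=> wf; split.
  rewrite /inv1 (@card_small _ _ 4) //.
    apply: eq_in_count => u; rewrite mem_iota /= => hu.
    rewrite nch_pt // (@inordK n0.+4 u) //; lia.
  move=> w /eqP h; case: (ltnP w 4) => // h4.
  by have := nch_pos wf h4; rewrite h.
rewrite /inv2 (@card_small _ _ 4) //.
  apply: eq_in_count => u; rewrite mem_iota /= => hu.
  have /andP[a b] := wfbP wf hu.
  have iu : (@inord n0.+4 u : nat) = u by rewrite inordK //; lia.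
  have ib : (@inord n0.+4 (nth 0 bot u) : nat) = nth 0 bot u by rewrite inordK //; lia.
  rewrite /lp nch_pt ?iu //; last by lia.
  rewrite ffunE iu hu nch_pt ?ib //; lia.
move=> w /andP[/eqP h _]; case: (ltnP w 4) => // h4.
by have := nch_pos wf h4; rewrite h.
Qed.

Lemma noniso b1 b2 : wfb b1 -> wfb b2 -> (I1 b1 != I1 b2) || (I2 b1 != I2 b2) ->
  ~~ rtree_iso (pt n0 b1) (pt n0 b2).
Proof.
move=> w1 w2 H; apply/negP => /iso_inv [].
case: (inv_pt w1) (inv_pt w2) => -> -> [-> ->] e1 e2.
by move: H; rewrite e1 e2 !eqxx.
Qed.

Lemma coef_rel m :
  coefF (pt n0 botB) m + coefF (pt n0 botC) m + coefF (pt n0 botE) m =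
  coefF (pt n0 botA) m + (coefF (pt n0 botD) m).*2.
Proof.
case: wf_all => a b c d e.
rewrite !coefF_pt // -!big_split /= -muln2 big_distrl -big_split /=.
have := main_nat n0 m => H.
transitivity (\sum_(f : {ffun 'I_N -> 'I_(size m)}) CC f * LL (hf f)).
  by apply: eq_bigr => f _; rewrite /LL !mulnDr.
rewrite H; apply: eq_bigr => f _; by rewrite /RR mulnDr -muln2 mulnA.
Qed.
End Inv.

Unset Implicit Arguments.
Local Open Scope ring_scope.

Theorem mainTheorem7 (n : nat) (hn : (5 <= n)%N) :
  exists s : seq (parent_fun n * rat),
    all (fun tc => is_rooted_tree tc.1) s /\
    pairwise (fun a b => ~~ rtree_iso a.1 b.1) s /\
    has (fun tc => tc.2 != 0) s /\
    forall m : seq nat, \sum_(tc <- s) tc.2 * (coefF tc.1 m)%:R = 0.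
Proof.
have {hn} -> : n = (n - 5).+4.+1 by lia.
move: (n - 5)%N => n0.
exists [:: (pt n0 botA, -1); (pt n0 botB, 1); (pt n0 botC, 1); (pt n0 botD, -2); (pt n0 botE, 1)].
case: wf_all => wa wb wc wd we.
split; first by rewrite /= !pt_tree.
split; first by rewrite /= !noniso.
split; first by [].
move=> m; rewrite !big_cons big_nil /=.
have := coef_rel n0 m => /(congr1 (fun x : nat => x%:R : rat)).
rewrite -addnn !natrD.
set a := (coefF (pt n0 botA) m)%:R; set b := (coefF (pt n0 botB) m)%:R.
set c := (coefF (pt n0 botC) m)%:R; set d := (coefF (pt n0 botD) m)%:R.
set e := (coefF (pt n0 botE) m)%:R.
move=> H; lra.
Qed.
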